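(* Let $n,m,p,N\in\mathbb{N}_+$, $B\in\mathbb{R}^{n\times m}$, $C\in\mathbb{R}^{p\times n}$ of full column rank, $x_0\in\mathbb{R}^n$, $r_1,\dots,r_N\in\mathbb{R}^p$, $r_0:=Cx_0$, and $\mathcal{S}_{\rm M1}\subseteq\mathbb{R}^{n\times n}\times\mathbb{R}^{m\times N}$. Problem (MOPUL1) is: minimize $\sum_{t=1}^N\|y_t-r_t\|_2$ over $(A,U)\in\mathcal{S}_{\rm M1}$, $U=(u_0,\dots,u_{N-1})$, where $x_t=Ax_{t-1}+Bu_{t-1}$ ($t=1,\dots,N$) and $y_t=Cx_t$; let $v^*_{\rm M1}$ be its optimal value and $\mathcal{F}^*_{\rm M1}$ its optimal solution set. Problem (AMOPUL1) is: minimize $\sum_{t=1}^N\|CAC^{\dagger}r_{t-1}+CBu_{t-1}-r_t\|_2$ over $(A,U)\in\mathcal{S}_{\rm M1}$; let $v^*_{\rm A1}$ be its optimal value. For $\epsilon=(\epsilon_1,\dots,\epsilon_N)\in\mathbb{R}^N_+$ let $\mathcal{Z}_\epsilon:=\{(A,U)\in\mathcal{S}_{\rm M1}: \hat y_0=Cx_0,\ \hat y_t=CAC^{\dagger}\hat y_{t-1}+CBu_{t-1},\ \|\hat y_t-r_t\|_2\le\epsilon_t,\ t=1,\dots,N\}$. For $(A^*,U^* )\in\mathcal{F}^*_{\rm M1}$ with $U^*=(u^*_0,\dots,u^*_{N-1})$, define $\hat y^*_0=Cx_0$, $\hat y^*_t=CA^*C^{\dagger}\hat y^*_{t-1}+CBu^*_{t-1}$,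 $\epsilon^*_t=\|\hat y^*_t-r_t\|_2$, and $\mathcal{Z}^*_{\epsilon}(A^*,U^* ):=\mathcal{Z}_{\epsilon^*}$. If (MOPUL1) is attainable (i.e., $\mathcal{F}^*_{\rm M1}\ne\emptyset$), then $$v^*_{\rm A1}\le(1+\gamma^* )v^*_{\rm M1},\qquad \gamma^*:=\inf_{(A^*,U^* )\in\mathcal{F}^*_{\rm M1}}\ \inf_{(A,U)\in\mathcal{Z}^*_{\epsilon}(A^*,U^* )}\|CAC^{\dagger}\|_2.$$
   Context: $C^{\dagger}$ is the Moore–Penrose inverse of $C$; $\|\cdot\|_2$ is the Euclidean norm for vectors and the spectral norm for matrices. In the paper $\mathcal{S}_{\rm M1}$ is assumed SD representable, though this is not used in the claim. *)

(* Defs.v *)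
From HB Require Import structures.
From mathcomp Require Import all_boot all_order all_algebra.
From mathcomp Require Import classical_sets reals.
Set Implicit Arguments. Unset Strict Implicit. Unset Printing Implicit Defensive.
Import Order.TTheory GRing.Theory Num.Theory.
Local Open Scope ring_scope.
Local Open Scope classical_set_scope.

Definition vnorm (R : realType) (k : nat) (v : 'cV[R]_k) : R :=
  Num.sqrt (\sum_(i < k) v i 0 ^+ 2).

Definition specnorm (R : realType) (a b : nat) (M : 'M[R]_(a, b)) : R :=
  sup [set vnorm (M *m x) | x in [set x : 'cV[R]_b | vnorm x <= 1]].

Definition is_MP_inverse (R : realType) (a b : nat)
  (C : 'M[R]_(a, b)) (Cd : 'M[R]_(b, a)) : Prop :=
  [/\ C *m Cd *m C = C, Cd *m C *m Cd = Cd,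
      (C *m Cd)^T = C *m Cd & (Cd *m C)^T = Cd *m C].

(* u_t : the (t+1)-th column of U = (u_0,...,u_{N-1}); 0 if t >= N (never used) *)
Definition ucol (R : realType) (m N : nat) (U : 'M[R]_(m, N)) (t : nat) : 'cV[R]_m :=
  \col_i (if insub t is Some j then U i j else 0).

Fixpoint traj (R : realType) (n m N : nat) (A : 'M[R]_n) (B : 'M[R]_(n, m))
  (x0 : 'cV[R]_n) (U : 'M[R]_(m, N)) (t : nat) : 'cV[R]_n :=
  match t with
  | 0 => x0
  | t'.+1 => A *m traj A B x0 U t' + B *m ucol U t'
  end.

Fixpoint yhat (R : realType) (n m p N : nat) (C : 'M[R]_(p, n)) (Cd : 'M[R]_(n, p))
  (A : 'M[R]_n) (B : 'M[R]_(n, m)) (x0 : 'cV[R]_n) (U : 'M[R]_(m, N)) (t : nat)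
  : 'cV[R]_p :=
  match t with
  | 0 => C *m x0
  | t'.+1 => C *m A *m Cd *m yhat C Cd A B x0 U t' + C *m B *m ucol U t'
  end.

Definition objM1 (R : realType) (n m p N : nat) (C : 'M[R]_(p, n))
  (B : 'M[R]_(n, m)) (x0 : 'cV[R]_n) (r : nat -> 'cV[R]_p)
  (AU : 'M[R]_n * 'M[R]_(m, N)) : R :=
  \sum_(t < N) vnorm (C *m traj AU.1 B x0 AU.2 t.+1 - r t.+1).

Definition objA1 (R : realType) (n m p N : nat) (C : 'M[R]_(p, n))
  (Cd : 'M[R]_(n, p)) (B : 'M[R]_(n, m)) (r : nat -> 'cV[R]_p)
  (AU : 'M[R]_n * 'M[R]_(m, N)) : R :=
  \sum_(t < N) vnorm (C *m AU.1 *m Cd *m r t + C *m B *m ucol AU.2 t - r t.+1).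

Definition optval (R : realType) (T : Type) (S : set T) (f : T -> R) : R :=
  inf [set f z | z in S].

Definition optset (R : realType) (T : Type) (S : set T) (f : T -> R) : set T :=
  [set z | S z /\ forall z', S z' -> f z <= f z'].

(* Z_eps, with eps t the bound for t = 1..N (eps 0 unused) *)
Definition Zeps (R : realType) (n m p N : nat) (C : 'M[R]_(p, n)) (Cd : 'M[R]_(n, p))
  (B : 'M[R]_(n, m)) (x0 : 'cV[R]_n) (r : nat -> 'cV[R]_p)
  (S : set ('M[R]_n * 'M[R]_(m, N))) (eps : nat -> R)
  : set ('M[R]_n * 'M[R]_(m, N)) :=
  [set AU | S AU /\ forall t : 'I_N,
     vnorm (yhat C Cd AU.1 B x0 AU.2 t.+1 - r t.+1) <= eps t.+1].

Definition epsstar (R : realType) (n m p N : nat) (C : 'M[R]_(p, n)) (Cd : 'M[R]_(n, p))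
  (B : 'M[R]_(n, m)) (x0 : 'cV[R]_n) (r : nat -> 'cV[R]_p)
  (AUs : 'M[R]_n * 'M[R]_(m, N)) (t : nat) : R :=
  vnorm (yhat C Cd AUs.1 B x0 AUs.2 t - r t).

Definition gammastar (R : realType) (n m p N : nat) (C : 'M[R]_(p, n))
  (Cd : 'M[R]_(n, p)) (B : 'M[R]_(n, m)) (x0 : 'cV[R]_n) (r : nat -> 'cV[R]_p)
  (S : set ('M[R]_n * 'M[R]_(m, N))) : R :=
  inf [set inf [set specnorm (C *m AU.1 *m Cd) | AU in
                  Zeps C Cd B x0 r S (epsstar C Cd B x0 r AUs)]
       | AUs in optset S (objM1 C B x0 r)].

(* Main.v *)
Require Import Defs.
From HB Require Import structures.
From mathcomp Require Import all_boot all_order all_algebra.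
From mathcomp Require Import classical_sets reals.
From mathcomp Require Import ring lra.
Import Order.TTheory GRing.Theory Num.Theory.
Local Open Scope ring_scope.
Local Open Scope classical_set_scope.

Section Aux.
Variable R : realType.
Set Implicit Arguments.

Lemma vnorm_ge0 k (v : 'cV[R]_k) : 0 <= vnorm v.
Proof. exact: sqrtr_ge0. Qed.

Lemma sumsq_ge0 k (v : 'cV[R]_k) : 0 <= \sum_(i < k) v i 0 ^+ 2.
Proof. by apply: sumr_ge0 => i _; exact: sqr_ge0. Qed.

Lemma vnormN k (v : 'cV[R]_k) : vnorm (- v) = vnorm v.
Proof. by rewrite /vnorm; congr Num.sqrt; apply: eq_bigr => i _; rewrite mxE sqrrN. Qed.

Lemma vnorm0 k : vnorm (0 : 'cV[R]_k) = 0.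
Proof.
rewrite /vnorm big1 ?sqrtr0 // => i _; by rewrite mxE expr0n.
Qed.

Lemma vnormZ k (c : R) (v : 'cV[R]_k) : vnorm (c *: v) = `|c| * vnorm v.
Proof.
rewrite /vnorm (eq_bigr (fun i => c ^+ 2 * v i 0 ^+ 2)); last first.
  by move=> i _; rewrite mxE exprMn.
by rewrite -mulr_sumr sqrtrM ?sqr_ge0 // sqrtr_sqr.
Qed.

Lemma CS k (u v : 'cV[R]_k) :
  (\sum_(i < k) u i 0 * v i 0) ^+ 2 <=
  (\sum_(i < k) u i 0 ^+ 2) * (\sum_(i < k) v i 0 ^+ 2).
Proof.
set a := fun i => u i 0; set b := fun i => v i 0.
have H : 0 <= \sum_(i < k) \sum_(j < k) (a i * b j - a j * b i) ^+ 2.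
  by apply: sumr_ge0 => i _; apply: sumr_ge0 => j _; exact: sqr_ge0.
have E : \sum_(i < k) \sum_(j < k) (a i * b j - a j * b i) ^+ 2 =
  \sum_(i < k) \sum_(j < k) (a i ^+ 2 * b j ^+ 2) +
  \sum_(i < k) \sum_(j < k) (a j ^+ 2 * b i ^+ 2) -
  2 * \sum_(i < k) \sum_(j < k) ((a i * b i) * (a j * b j)).
  rewrite mulr_sumr -!big_split /= -sumrB; apply: eq_bigr => i _.
  rewrite mulr_sumr -!big_split /= -sumrB; apply: eq_bigr => j _.
  ring.
move: H; rewrite E.
rewrite (exchange_big _ _ _ _ _ (fun i j => a j ^+ 2 * b i ^+ 2)) /=.
have -> : \sum_(i < k) \sum_(j < k) (a i ^+ 2 * b j ^+ 2) =
   (\sum_(i < k) a i ^+ 2) * (\sum_(i < k) b i ^+ 2).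
  by rewrite mulr_suml; apply: eq_bigr => i _; rewrite mulr_sumr.
have -> : \sum_(i < k) \sum_(j < k) ((a i * b i) * (a j * b j)) =
   (\sum_(i < k) a i * b i) ^+ 2.
  by rewrite expr2 mulr_suml; apply: eq_bigr => i _; rewrite mulr_sumr.
move=> H; lra.
Qed.

Lemma vnormD k (u v : 'cV[R]_k) : vnorm (u + v) <= vnorm u + vnorm v.
Proof.
rewrite /vnorm.
set A := \sum_(i < k) u i 0 ^+ 2; set B := \sum_(i < k) v i 0 ^+ 2.
set D := \sum_(i < k) u i 0 * v i 0.
have -> : \sum_(i < k) (u + v) i 0 ^+ 2 = A + B + 2 * D.
  rewrite /A /B /D mulr_sumr -!big_split /=; apply: eq_bigr => i _.
  rewrite mxE; ring.
have A0 : 0 <= A by apply: sumsq_ge0.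
have B0 : 0 <= B by apply: sumsq_ge0.
have hD : D <= Num.sqrt A * Num.sqrt B.
  rewrite -sqrtrM //.
  apply: le_trans (ler_norm D) _.
  rewrite -sqrtr_sqr ler_sqrt ?mulr_ge0 //; exact: CS.
have hS : 0 <= Num.sqrt A + Num.sqrt B by rewrite addr_ge0 ?sqrtr_ge0.
rewrite -[X in _ <= X](ger0_norm hS) -sqrtr_sqr ler_sqrt ?sqr_ge0 //.
rewrite sqrrD !sqr_sqrtr //; lra.
Qed.


Lemma coord_le k (x : 'cV[R]_k) j : x j 0 ^+ 2 <= vnorm x ^+ 2.
Proof.
rewrite /vnorm sqr_sqrtr ?sumsq_ge0 // (bigD1 j) //= lerDl.
by apply: sumr_ge0 => i _; exact: sqr_ge0.
Qed.

Definition snset {a b} (M : 'M[R]_(a, b)) :=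
  [set vnorm (M *m x) | x in [set x : 'cV[R]_b | vnorm x <= 1]].

Lemma snset_ub a b (M : 'M[R]_(a, b)) : has_ubound (snset M).
Proof.
exists (Num.sqrt (\sum_(i < a) (\sum_(j < b) `|M i j|) ^+ 2)).
move=> _ [x /= hx <-].
rewrite /vnorm ler_sqrt; last by apply: sumr_ge0 => i _; exact: sqr_ge0.
apply: ler_sum => i _.
have h1 : `|(M *m x) i 0| <= \sum_(j < b) `|M i j|.
  rewrite mxE; apply: le_trans (ler_norm_sum _ _ _) _.
  apply: ler_sum => j _; rewrite normrM.
  have hxj : `|x j 0| <= 1.
    have := coord_le x j; have := vnorm_ge0 x.
    rewrite -[x j 0 ^+ 2]real_normK ?num_real // => h0 h2.
    have := normr_ge0 (x j 0); nra.
  have := normr_ge0 (M i j); nra.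
rewrite -[(M *m x) i 0 ^+ 2]real_normK ?num_real //.
have := normr_ge0 ((M *m x) i 0); nra.
Qed.

Lemma specnorm_ge0 a b (M : 'M[R]_(a, b)) : 0 <= specnorm M.
Proof.
apply: (ub_le_sup (snset_ub M)); exists 0; first by rewrite /= vnorm0 ler01.
by rewrite mulmx0 vnorm0.
Qed.

Lemma specnormP a b (M : 'M[R]_(a, b)) x : vnorm (M *m x) <= specnorm M * vnorm x.
Proof.
have [hx0|hxp] := eqVneq (vnorm x) 0.
  have -> : x = 0.
    apply/matrixP => i j; rewrite (ord1 j) mxE.
    move: hx0; rewrite /vnorm => /eqP; rewrite sqrtr_eq0 => hs.
    have hs' : \sum_(i < b) x i 0 ^+ 2 = 0.
      by apply/eqP; rewrite eq_le hs sumsq_ge0.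
    have := @psumr_eq0P _ _ xpredT (fun i => x i 0 ^+ 2) (fun i _ => sqr_ge0 _) hs' i isT.
    by move/eqP; rewrite sqrf_eq0 => /eqP.
  by rewrite mulmx0 !vnorm0 mulr0.
have hp : 0 < vnorm x by rewrite lt_def hxp vnorm_ge0.
have : snset M (vnorm (M *m ((vnorm x)^-1 *: x))).
  exists ((vnorm x)^-1 *: x) => //=.
  by rewrite vnormZ ger0_norm ?invr_ge0 ?vnorm_ge0 // mulVf.
move/(ub_le_sup (snset_ub M)); rewrite -/(specnorm M).
rewrite -scalemxAr vnormZ ger0_norm ?invr_ge0 ?vnorm_ge0 // mulrC.
by rewrite ler_pdivrMr.
Qed.

End Aux.

Lemma CdC (R : realType) n p (C : 'M[R]_(p, n)) (Cd : 'M[R]_(n, p)) :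
  \rank C = n -> C *m Cd *m C = C -> Cd *m C = 1%:M.
Proof.
move=> hr h.
have h0 : C *m (Cd *m C - 1%:M) = 0 by rewrite mulmxBr mulmxA h mulmx1 subrr.
have hf : row_free C^T by rewrite /row_free mxrank_tr hr.
have : (Cd *m C - 1%:M)^T *m C^T == 0 by rewrite -trmx_mul h0 trmx0.
rewrite mulmx_free_eq0 // => /eqP h1.
by apply/eqP; rewrite -subr_eq0; apply/eqP; apply: trmx_inj; rewrite h1 trmx0.
Qed.

Lemma yhat_traj (R : realType) n m p N (C : 'M[R]_(p, n)) (Cd : 'M[R]_(n, p))
  (A : 'M[R]_n) (B : 'M[R]_(n, m)) x0 (U : 'M[R]_(m, N)) :
  Cd *m C = 1%:M -> forall t, yhat C Cd A B x0 U t = C *m traj A B x0 U t.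
Proof.
move=> h; elim=> [|t IH] //=.
by rewrite IH -!mulmxA (mulmxA Cd) h mul1mx mulmxDr !mulmxA.
Qed.

Lemma inf_le_el (R : realType) (T : Type) (S : set T) (f : T -> R) z :
  (forall z, 0 <= f z) -> S z -> optval S f <= f z.
Proof.
move=> h0 hz.
have hl : has_lbound [set f z | z in S] by exists 0 => _ [w _ <-].
by apply: (ge_inf hl); exists z.
Qed.

Lemma inf_opt (R : realType) (T : Type) (S : set T) (f : T -> R) z :
  (forall z, 0 <= f z) -> optset S f z -> optval S f = f z.
Proof.
move=> h0 [hz hmin]; apply/eqP; rewrite eq_le inf_le_el //=.
by apply: lb_le_inf; [exists (f z), z | move=> _ [w hw <-]; exact: hmin].
Qed.

Lemma inf_aux (R : realType) (H : set R) (a b : R) :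
  H !=set0 -> 0 <= b -> (forall h, H h -> a <= (1 + h) * b) ->
  a <= (1 + inf H) * b.
Proof.
move=> [h0 Hh0] hb hH.
have [b0|bn0] := eqVneq b 0.
  by move: (hH _ Hh0); rewrite b0 !mulr0.
have bp : 0 < b by rewrite lt_def bn0 hb.
have : a / b - 1 <= inf H.
  apply: lb_le_inf; first by exists h0.
  move=> h Hh; have := hH _ Hh; rewrite -ler_pdivrMr // => h1; lra.
rewrite lerBlDl -ler_pdivrMr //.
Qed.

Lemma shift_sum (R : realType) N (f : nat -> R) :
  f 0%N = 0 -> (forall t, 0 <= f t) -> \sum_(t < N) f t <= \sum_(t < N) f t.+1.
Proof.
move=> f0 fge; case: N => [|N']; first by rewrite !big_ord0.
rewrite big_ord_recl big_ord_recr /= f0 add0r lerDl; exact: fge.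
Qed.

Lemma key (R : realType) n m p N (C : 'M[R]_(p, n)) (Cd : 'M[R]_(n, p))
  (B : 'M[R]_(n, m)) x0 (r : nat -> 'cV[R]_p) (hr0 : r 0%N = C *m x0)
  (A : 'M[R]_n) (U : 'M[R]_(m, N)) (eps : nat -> R) :
  (forall t : 'I_N, vnorm (yhat C Cd A B x0 U t.+1 - r t.+1) <= eps t.+1) ->
  objA1 C Cd B r (A, U) <= (1 + specnorm (C *m A *m Cd)) * \sum_(t < N) eps t.+1.
Proof.
move=> hZ.
set M := C *m A *m Cd.
set e := fun t => vnorm (yhat C Cd A B x0 U t - r t).
have e0 : forall t, 0 <= e t by move=> t; exact: vnorm_ge0.
have step : forall t, vnorm (M *m r t + C *m B *m ucol U t - r t.+1)
                     <= specnorm M * e t + e t.+1.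
  move=> t.
  have -> : M *m r t + C *m B *m ucol U t - r t.+1 =
            M *m (r t - yhat C Cd A B x0 U t) + (yhat C Cd A B x0 U t.+1 - r t.+1).
    by rewrite /= mulmxBr !addrA subrK.
  apply: le_trans (vnormD _ _ _) _; apply: lerD => //.
  by rewrite -opprB mulmxN vnormN; exact: specnormP.
have g0 := specnorm_ge0 _ M.
have h1 : objA1 C Cd B r (A, U) <= specnorm M * \sum_(t < N) e t + \sum_(t < N) e t.+1.
  rewrite mulr_sumr -big_split /=; apply: ler_sum => t _; exact: step.
have h2 : \sum_(t < N) e t <= \sum_(t < N) e t.+1.
  apply: shift_sum => //.
  by rewrite /e /= hr0 subrr vnorm0.
have h3 : \sum_(t < N) e t.+1 <= \sum_(t < N) eps t.+1.
  by apply: ler_sum => t _; exact: hZ.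
nra.
Qed.

Theorem theorem5 (R : realType) (n m p N : nat)
  (hn : (0 < n)%N) (hm : (0 < m)%N) (hp : (0 < p)%N) (hN : (0 < N)%N)
  (B : 'M[R]_(n, m)) (C : 'M[R]_(p, n)) (Cd : 'M[R]_(n, p))
  (hC : \rank C = n) (hCd : is_MP_inverse C Cd)
  (x0 : 'cV[R]_n) (r : nat -> 'cV[R]_p) (hr0 : r 0%N = C *m x0)
  (S : set ('M[R]_n * 'M[R]_(m, N)))
  (hatt : optset S (objM1 C B x0 r) !=set0) :
  optval S (objA1 C Cd B r)
    <= (1 + gammastar C Cd B x0 r S) * optval S (objM1 C B x0 r).
Proof.
move: hatt => [AUs hAUs].
have hCdC : Cd *m C = 1%:M.
  by case: hCd => h _ _ _; exact: (@CdC _ _ _ C Cd hC h).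
have f0 : forall z : 'M[R]_n * 'M[R]_(m, N), 0 <= objM1 C B x0 r z.
  by move=> z; rewrite /objM1; apply: sumr_ge0 => t _; exact: vnorm_ge0.
have fA0 : forall z : 'M[R]_n * 'M[R]_(m, N), 0 <= objA1 C Cd B r z.
  by move=> z; rewrite /objA1; apply: sumr_ge0 => t _; exact: vnorm_ge0.
have vM : forall z : 'M[R]_n * 'M[R]_(m, N), optset S (objM1 C B x0 r) z -> optval S (objM1 C B x0 r) = objM1 C B x0 r z.
  by move=> z hz; apply: inf_opt.
apply: inf_aux.
- by eexists; exists AUs.
- by rewrite (vM _ hAUs).
move=> _ [AUs' hopt <-].
apply: inf_aux.
- exists (specnorm (C *m AUs'.1 *m Cd)); exists AUs' => //.
  by split; [exact: hopt.1 | move=> t; rewrite /epsstar].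
- by rewrite (vM _ hopt).
move=> _ [[A U] [SAU hZ] <-].
apply: le_trans (@inf_le_el _ _ S _ (A, U) fA0 SAU) _.
apply: le_trans (@key _ _ _ _ _ C Cd B x0 r hr0 A U _ hZ) _.
rewrite (vM _ hopt) /objM1 /epsstar.
under eq_bigr => t _ do rewrite (yhat_traj _ _ _ _ hCdC).
by [].
Qed.
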